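(* Let $R=k[x_1,\dots,x_n]$ be a polynomial ring over a field $k$, and let $I$ be a monomial ideal of $R$ such that for every $F\in\mathcal F(I)$ the primary component $I_F$ is generated by monomials of one and the same degree $d_F$. Then $I^{(t)}$ is integrally closed for all $t\gg 0$ if and only if for every $F\in\mathcal F(I)$ the ideal $I_F$ contains the monomials $x_i^{d_F-1}x_j$ for all $i,j\notin F$.
   Context: For $F\subseteq[n]=\{1,\dots,n\}$, $P_F$ is the ideal generated by the variables $x_i$ with $i\notin F$. $\mathcal F(I)$ is the set of all $F\subseteq[n]$ such that $P_F$ is a minimal prime of $I$, and for $F\in\mathcal F(I)$, $I_F$ denotes the primary component of $I$ associated with $P_F$. The $t$-th symbolic power $I^{(t)}$ is the intersection of the primary components of $I^t$ associated with the minimal primes of $I$. *)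

(* Defs.v *)
From HB Require Import structures.
From mathcomp Require Import all_boot all_order all_algebra.
From mathcomp Require Import mpoly.
Set Implicit Arguments. Unset Strict Implicit. Unset Printing Implicit Defensive.
Import GRing.Theory.
Local Open Scope ring_scope.

Section IdealTheory.
Variable R : comRingType.

Definition ideal_gen (S : R -> Prop) : R -> Prop :=
  fun f => exists s : seq (R * R),
    (forall p, p \in s -> S p.2) /\ f = \sum_(p <- s) p.1 * p.2.

Definition is_ideal (J : R -> Prop) : Prop :=
  [/\ J 0, (forall a b, J a -> J b -> J (a + b)) & (forall r a, J a -> J (r * a))].

Definition is_prime_ideal (P : R -> Prop) : Prop :=
  [/\ is_ideal P, ~ P 1 & (forall a b, P (a * b) -> P a \/ P b)].

Definition minimal_prime (I P : R -> Prop) : Prop :=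
  [/\ is_prime_ideal P, (forall f, I f -> P f) &
      (forall Q, is_prime_ideal Q -> (forall f, I f -> Q f) ->
         (forall f, Q f -> P f) -> forall f, P f -> Q f)].

Definition ideal_mul (I J : R -> Prop) : R -> Prop :=
  ideal_gen (fun f => exists a b, [/\ I a, J b & f = a * b]).

Fixpoint ideal_pow (I : R -> Prop) (t : nat) : R -> Prop :=
  match t with
  | 0 => fun _ => True
  | t'.+1 => ideal_mul (ideal_pow I t') I
  end.

Definition integral_over_ideal (I : R -> Prop) (f : R) : Prop :=
  exists (m : nat) (a : nat -> R),
    [/\ (0 < m)%N, (forall i, (1 <= i <= m)%N -> ideal_pow I i (a i)) &
        f ^+ m + \sum_(1 <= i < m.+1) a i * f ^+ (m - i) = 0].

Definition integrally_closed (I : R -> Prop) : Prop :=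
  forall f, integral_over_ideal I f -> I f.

(* The primary component of J associated with a minimal prime P of J:
   the contraction J R_P \cap R = {f | g f \in J for some g \notin P}. *)
Definition iso_component (J P : R -> Prop) : R -> Prop :=
  fun f => exists g, ~ P g /\ J (g * f).

End IdealTheory.

Section Monomial.
Variables (k : fieldType) (n : nat).
Local Notation R := {mpoly k[n]}.

Definition monomial_ideal (I : R -> Prop) : Prop :=
  exists S : 'X_{1..n} -> Prop,
    forall f, I f <-> ideal_gen (fun g => exists m, S m /\ g = 'X_[m]) f.

Definition gen_by_monomials_of_degree (J : R -> Prop) (d : nat) : Prop :=
  exists S : 'X_{1..n} -> Prop, (forall m, S m -> mdeg m = d) /\
    forall f, J f <-> ideal_gen (fun g => exists m, S m /\ g = 'X_[m]) f.

Definition PF (F : {set 'I_n}) : R -> Prop :=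
  ideal_gen (fun g => exists i : 'I_n, i \notin F /\ g = 'X_i).

Definition in_calF (I : R -> Prop) (F : {set 'I_n}) : Prop :=
  minimal_prime I (PF F).

Definition IF (I : R -> Prop) (F : {set 'I_n}) : R -> Prop :=
  iso_component I (PF F).

Definition symbolic_power (I : R -> Prop) (t : nat) : R -> Prop :=
  fun f => forall F, in_calF I F -> iso_component (ideal_pow I t) (PF F) f.

End Monomial.

(* Main.v *)
Require Import Defs.
From HB Require Import structures.
From mathcomp Require Import all_boot all_order all_algebra.
From mathcomp Require Import mpoly.
From mathcomp Require Import ring zify.
From Stdlib Require Import Classical.
Set Implicit Arguments. Unset Strict Implicit. Unset Printing Implicit Defensive.
Import GRing.Theory.
Local Open Scope ring_scope.

Section Gen.
Variable R : comRingType.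
Implicit Types (S J K P : R -> Prop).

Lemma ideal_gen_ideal S : is_ideal (ideal_gen S).
Proof.
split.
- by exists [::]; split => //; rewrite big_nil.
- move=> a b [s [Hs ->]] [s' [Hs' ->]]; exists (s ++ s'); split; last by rewrite big_cat.
  by move=> p; rewrite mem_cat => /orP [/Hs|/Hs'].
- move=> r a [s [Hs ->]]; exists [seq (r * p.1, p.2) | p <- s]; split.
  + by move=> p /mapP [q qs ->]; exact: (Hs q qs).
  + by rewrite big_map big_distrr /=; apply: eq_bigr => p _; rewrite mulrA.
Qed.

Lemma ideal_gen_in S x : S x -> ideal_gen S x.
Proof.
move=> Sx; exists [:: (1, x)]; split; first by move=> p; rewrite mem_seq1 => /eqP ->.
by rewrite big_seq1 mul1r.
Qed.

Lemma ideal_gen_min S J : is_ideal J -> (forall x, S x -> J x) ->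
  forall f, ideal_gen S f -> J f.
Proof.
move=> [J0 JD JM] SJ f [s [Hs ->]].
elim: s Hs => [|p s IH] Hs; first by rewrite big_nil.
rewrite big_cons; apply: JD; first by apply: JM; apply: SJ; apply: Hs; rewrite mem_head.
by apply: IH => q qs; apply: Hs; rewrite in_cons qs orbT.
Qed.

Lemma ideal_sum J (T : eqType) (r : seq T) (F : T -> R) : is_ideal J ->
  (forall x, x \in r -> J (F x)) -> J (\sum_(x <- r) F x).
Proof.
move=> [J0 JD JM] HF; rewrite big_seq; apply: big_ind => //.
Qed.

Lemma ideal_mulr J a b : is_ideal J -> J b -> J (a * b).
Proof. by case=> _ _ JM; apply: JM. Qed.

Lemma ideal_mull J a b : is_ideal J -> J a -> J (a * b).
Proof. by move=> HJ Ja; rewrite mulrC; apply: ideal_mulr. Qed.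

Lemma ideal_pow_ideal K t : is_ideal (ideal_pow K t).
Proof. case: t => [|t] /=; last exact: ideal_gen_ideal. by split. Qed.

Lemma ideal_pow_mul K t a b : ideal_pow K t a -> K b -> ideal_pow K t.+1 (a * b).
Proof. move=> Ha Kb; apply: ideal_gen_in; by exists a, b. Qed.

Lemma ideal_pow_exp K x t : K x -> ideal_pow K t (x ^+ t).
Proof. move=> Kx; elim: t => [|t IH] //; rewrite exprSr; exact: ideal_pow_mul. Qed.

Lemma iso_ideal J P : is_ideal J -> is_prime_ideal P -> is_ideal (iso_component J P).
Proof.
move=> [J0 JD JM] [[P0 PD PM] P1 Pp]; split.
- by exists 1; split => //; rewrite mulr0.
- move=> a b [g [Pg Ja]] [h [Ph Jb]]; exists (g * h); split.
  + by case/Pp.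
  + have -> : g * h * (a + b) = h * (g * a) + g * (h * b) by ring.
    by apply: JD; apply: JM.
- move=> r a [g [Pg Ja]]; exists g; split => //.
  have -> : g * (r * a) = r * (g * a) by ring.
  exact: JM.
Qed.

Lemma iso_of J P f : ~ P 1 -> J f -> iso_component J P f.
Proof. by move=> P1 Jf; exists 1; rewrite mul1r. Qed.

Lemma iso_mul K P s a b : is_prime_ideal P ->
  iso_component (ideal_pow K s) P a -> iso_component K P b ->
  iso_component (ideal_pow K s.+1) P (a * b).
Proof.
move=> [_ _ Pp] [g [Pg Ja]] [h [Ph Jb]]; exists (g * h); split; first by case/Pp.
have -> : g * h * (a * b) = (g * a) * (h * b) by ring.
exact: ideal_pow_mul.
Qed.

Lemma iso_exp K P x t : is_prime_ideal P -> iso_component K P x ->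
  iso_component (ideal_pow K t) P (x ^+ t).
Proof.
move=> HP Kx; elim: t => [|t IH]; first by case: HP => _ P1 _; exists 1.
by rewrite exprSr; apply: iso_mul.
Qed.

Lemma iso_pow_ideal K P t : is_prime_ideal P -> is_ideal (iso_component (ideal_pow K t) P).
Proof. by move=> HP; apply: iso_ideal => //; apply: ideal_pow_ideal. Qed.

End Gen.


Section Mono.
Variables (k : fieldType) (n : nat).
Local Notation R := {mpoly k[n]}.
Implicit Types (G F : {set 'I_n}) (m u w : 'X_{1..n}) (f g h : R).

Definition SuppIn (D : 'X_{1..n} -> Prop) (h : R) := forall m, m \in msupp h -> D m.
Definition upc (D : 'X_{1..n} -> Prop) := forall m m', D m -> (m <= m')%MM -> D m'.
Definition degG G m := (\sum_(i < n | i \notin G) m i)%N.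
Definition Jd G N := SuppIn (fun m => N <= degG G m)%N.

Lemma SuppIn0 D : SuppIn D 0.
Proof. by move=> m; rewrite msupp0. Qed.

Lemma SuppInD D a b : SuppIn D a -> SuppIn D b -> SuppIn D (a + b).
Proof. by move=> Ha Hb m /msuppD_le; rewrite mem_cat => /orP [/Ha|/Hb]. Qed.

Lemma SuppInM D1 D2 a b : SuppIn D1 a -> SuppIn D2 b ->
  SuppIn (fun m => exists u w, [/\ D1 u, D2 w & m = (u + w)%MM]) (a * b).
Proof.
move=> Ha Hb m /msuppM_le /allpairsP [[u w] /= [hu hw ->]].
by exists u, w; split => //; [apply: Ha | apply: Hb].
Qed.

Lemma SuppInX D m : D m -> SuppIn D 'X_[m].
Proof. by move=> Dm m'; rewrite msuppX mem_seq1 => /eqP ->. Qed.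

Lemma SuppIn_ideal D : upc D -> is_ideal (SuppIn D).
Proof.
move=> uD; split.
- exact: SuppIn0.
- exact: SuppInD.
- move=> r a Ha m Hm.
  have := SuppInM (D1 := fun _ => True) (fun _ _ => I) Ha Hm.
  by move=> [u [w [_ Dw ->]]]; apply: (uD w) => //; apply: lem_addl.
Qed.

Lemma SuppIn_gen D S f : upc D -> (forall g, S g -> SuppIn D g) ->
  ideal_gen S f -> SuppIn D f.
Proof. by move=> uD HS; apply: ideal_gen_min => //; apply: SuppIn_ideal. Qed.

Lemma mdeg_le m m' : (m <= m')%MM -> (mdeg m <= mdeg m')%N.
Proof. by move=> h; rewrite -(submK h) mdegD leq_addl. Qed.

Lemma degGD G m1 m2 : degG G (m1 + m2)%MM = (degG G m1 + degG G m2)%N.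
Proof. by rewrite /degG -big_split; apply: eq_bigr => i _; rewrite mnmDE. Qed.

Lemma degG_le G m m' : (m <= m')%MM -> (degG G m <= degG G m')%N.
Proof. by move=> /mnm_lepP h; apply: leq_sum => i _; apply: h. Qed.

Lemma degGB G m s : (s <= m)%MM -> degG G (m - s)%MM = (degG G m - degG G s)%N.
Proof. by move=> h; rewrite -{2}(submK h) degGD addnK. Qed.

Lemma degGU G i : degG G U_(i)%MM = (i \notin G) :> nat.
Proof.
rewrite /degG; case: (boolP (i \in G)) => hi /=.
- by apply: big1 => j hj; rewrite mnm1E; case: eqP => // e; move: hj; rewrite -e hi.
- rewrite (bigD1 i) //= mnm1E eqxx big1 // => j /andP [_ hj].
  by rewrite mnm1E eq_sym (negbTE hj).
Qed.

Lemma degG_setT m : degG setT m = 0%N.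
Proof. by rewrite /degG big_pred0 // => i; rewrite in_setT. Qed.

Lemma degG0 G : degG G 0%MM = 0%N.
Proof. by rewrite /degG big1 // => i _; rewrite mnm0E. Qed.

Lemma Jd_upc G N : upc (fun m => N <= degG G m)%N.
Proof. by move=> m m' h1 h2; apply: leq_trans h1 (degG_le _ h2). Qed.

Lemma Jd_ideal G N : is_ideal (Jd G N).
Proof. exact/SuppIn_ideal/Jd_upc. Qed.

Lemma Jd0 G f : Jd G 0 f.
Proof. by []. Qed.

Lemma Jd_mono G N N' f : (N' <= N)%N -> Jd G N f -> Jd G N' f.
Proof. by move=> h H m /H; apply: leq_trans. Qed.

Lemma Jd_mul G a b x y : Jd G a x -> Jd G b y -> Jd G (a + b)%N (x * y).
Proof.
move=> hx hy m /(SuppInM hx hy) [u [w [hu hw ->]]].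
by rewrite degGD leq_add.
Qed.

Lemma Jd_exp G a x t : Jd G a x -> Jd G (a * t)%N (x ^+ t).
Proof.
move=> hx; elim: t => [|t IH]; first by rewrite muln0.
by rewrite exprS mulnS; apply: Jd_mul.
Qed.

Lemma Jd_X G m : Jd G (degG G m) 'X_[m].
Proof. exact: SuppInX. Qed.

Definition low G e h : R := \sum_(m <- msupp h | degG G m == e) h@_m *: 'X_[m].

Lemma mcoeff_low G e h m : (low G e h)@_m = if degG G m == e then h@_m else 0.
Proof.
rewrite /low raddf_sum /=.
rewrite (eq_bigr (fun u => if u == m then h@_u else 0)); last first.
  by move=> u _; rewrite mcoeffZ mcoeffX; case: eqP => _; rewrite ?mulr1 ?mulr0.
case: (boolP (m \in msupp h)) => hm.
- rewrite big_mkcond (bigD1_seq m) ?msupp_uniq //= eqxx.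
  rewrite big1 ?addr0; first by case: ifP.
  by move=> u hu; rewrite (negbTE hu); case: ifP.
- rewrite (memN_msupp_eq0 hm) if_same big1_seq // => u /andP [_ hu].
  by case: eqP => // e'; move: hm; rewrite -e' hu.
Qed.

Lemma low_E G e h : SuppIn (fun m => degG G m = e) h -> low G e h = h.
Proof.
move=> H; apply/mpolyP => m; rewrite mcoeff_low; case: eqP => // ne.
by apply/esym/eqP; rewrite mcoeff_eq0; apply/negP => /H.
Qed.

Lemma low_Z G e h : SuppIn (fun m => degG G m <> e) h -> low G e h = 0.
Proof.
move=> H; apply/mpolyP => m; rewrite mcoeff_low mcoeff0; case: eqP => // /eqP eq.
by apply/eqP; rewrite mcoeff_eq0; apply/negP => /H; rewrite (eqP eq).
Qed.

Lemma lowD G e a b : low G e (a + b) = low G e a + low G e b.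
Proof. by apply/mpolyP => m; rewrite mcoeffD !mcoeff_low mcoeffD; case: ifP; rewrite ?addr0. Qed.

Lemma low0 G e : low G e 0 = 0.
Proof. by apply: low_Z; apply: SuppIn0. Qed.

Lemma low_hom G e h : SuppIn (fun m => degG G m = e) (low G e h).
Proof.
by move=> m; rewrite mcoeff_msupp mcoeff_low; case: ifP => [/eqP //|_]; rewrite eqxx.





Qed.

Lemma low_Jd G e h : Jd G e h -> Jd G e.+1 (h - low G e h).
Proof.
move=> H m; rewrite mcoeff_msupp mcoeffB mcoeff_low.
case: ifP => [_|ne]; first by rewrite subrr eqxx.
rewrite subr0 -mcoeff_msupp => /H; rewrite leq_eqVlt => /orP [/eqP e'|//].
by move: ne; rewrite e' eqxx.

Qed.

Lemma low_JdZ G e h : Jd G e.+1 h -> low G e h = 0.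
Proof. by move=> H; apply: low_Z => m /H hm e'; move: hm; rewrite e' ltnn. Qed.

Lemma low_mul G e1 e2 a b : Jd G e1 a -> Jd G e2 b ->
  low G (e1 + e2)%N (a * b) = low G e1 a * low G e2 b.
Proof.
move=> Ha Hb.
set la := low G e1 a; set lb := low G e2 b.
have hla : Jd G e1 la by move=> m /(low_hom (e:=e1)) ->.
have -> : a * b = la * lb + (la * (b - lb) + (a - la) * b) by ring.
rewrite lowD [X in _ + X]low_JdZ ?addr0.
  apply: low_E => m /(SuppInM (low_hom (e:=e1) (h:=a)) (low_hom (e:=e2) (h:=b))).
  by move=> [u [w [hu hw ->]]]; rewrite degGD hu hw.
have := Jd_ideal G (e1 + e2).+1 => -[_ JD _]; apply: JD.
- by rewrite -addnS; apply: Jd_mul => //; apply: low_Jd.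
- by rewrite -addSn; apply: Jd_mul => //; apply: low_Jd.
Qed.

Lemma low_exp G e f t : Jd G e f -> low G (e * t)%N (f ^+ t) = (low G e f) ^+ t.
Proof.
move=> Hf; elim: t => [|t IH].
  rewrite muln0 !expr0; apply: low_E => m; rewrite -mpolyX0 msuppX mem_seq1 => /eqP ->.
  exact: degG0.
by rewrite mulnS !exprS low_mul ?IH //; apply: Jd_exp.
Qed.

Lemma lowval G h : h != 0 -> exists e, Jd G e h /\ low G e h != 0.
Proof.
move=> hn0.
have ex : exists e, has (fun m => degG G m == e) (msupp h).
  by exists (degG G (mlead h)); apply/hasP; exists (mlead h); rewrite ?mlead_supp.
case: (ex_minnP ex) => e /hasP [m hm /eqP dm] hmin.
exists e; split.
- by move=> u hu; apply: hmin; apply/hasP; exists u.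
- apply/negP => /eqP /mpolyP /(_ m); rewrite mcoeff_low dm eqxx mcoeff0 => /eqP.
  by rewrite mcoeff_eq0 hm.
Qed.

End Mono.


Section Mono3.
Variables (k : fieldType) (n : nat).
Local Notation R := {mpoly k[n]}.
Implicit Types (G F : {set 'I_n}) (m u w : 'X_{1..n}) (f g h : R).

Lemma exists_pos G m : (1 <= degG G m)%N -> exists i, i \notin G /\ (0 < m i)%N.
Proof.
move=> H; apply: NNPP => N; move: H; rewrite /degG big1 // => i hi.
case: (posnP (m i)) => // p; exfalso; apply: N; by exists i.
Qed.

Lemma PF_Jd G f : PF G f <-> Jd G 1 f.
Proof.
split.
- apply: SuppIn_gen; first exact: Jd_upc.
  move=> g [i [hi ->]]; have := @Jd_X k n G U_(i)%MM; rewrite degGU hi; exact.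

- move=> H; rewrite (mpolyE f); apply: ideal_sum; first exact: ideal_gen_ideal.
  move=> m /H /exists_pos [i [hi mi]].
  have le : (U_(i) <= m)%MM by rewrite lep1mP -lt0n.
  rewrite -(submK le) mpolyXD scalerAl; apply: ideal_mulr; first exact: ideal_gen_ideal.
  by apply: ideal_gen_in; exists i.
Qed.

Lemma Jd_1 G : ~ Jd G 1 (1 : R).
Proof.
move=> H; have := H 0%MM; rewrite -mpolyX0 msuppX mem_seq1 eqxx degG0.
by move=> /(_ isT).
Qed.

Lemma notPF_low G g : ~ PF G g -> low G 0 g != 0.
Proof.
move=> Hg; have gn0 : g != 0.
  by apply/negP => /eqP g0; apply: Hg; rewrite g0; apply/PF_Jd; apply: SuppIn0.
have [e [Je le]] := lowval G gn0.
case: e Je le => // e Je le; exfalso; apply: Hg; apply/PF_Jd.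
by apply: Jd_mono Je.
Qed.

Lemma PF_prime G : is_prime_ideal (@PF k n G).
Proof.
split.
- exact: ideal_gen_ideal.
- by move/PF_Jd; apply: Jd_1.
- move=> a b Hab; apply: NNPP => N.
  have Ha : ~ PF G a by move=> h; apply: N; left.
  have Hb : ~ PF G b by move=> h; apply: N; right.
  have := mulf_neq0 (notPF_low Ha) (notPF_low Hb).
  rewrite -low_mul ?add0n //; move/PF_Jd: Hab => /low_JdZ ->.
  by rewrite eqxx.
Qed.

Lemma notP_mul G N g f : ~ PF G g -> Jd G N (g * f) -> Jd G N f.
Proof.
move=> Hg H; apply: NNPP => Nf.
have fn0 : f != 0 by apply/negP => /eqP f0; apply: Nf; rewrite f0; apply: SuppIn0.
have [e [Je le]] := lowval G fn0.
have eN : (e < N)%N by rewrite ltnNge; apply/negP => h; apply: Nf; apply: Jd_mono Je.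
have := mulf_neq0 (notPF_low Hg) le.
rewrite -low_mul ?add0n //; rewrite low_JdZ ?eqxx //.
by apply: Jd_mono H.
Qed.

Lemma pow_Jd G N (K : R -> Prop) i x : (forall y, K y -> Jd G N y) ->
  ideal_pow K i x -> Jd G (i * N)%N x.
Proof.
move=> HK; elim: i x => [|i IH] x /=; first by move=> _; rewrite mul0n.
apply: SuppIn_gen; first exact: Jd_upc.
move=> g [a [b [Ha Kb ->]]]; rewrite mulSn addnC; apply: Jd_mul; [exact: IH | exact: HK].
Qed.

Lemma Jd_closed G N (K : R -> Prop) f : (forall x, K x -> Jd G N x) ->
  integral_over_ideal K f -> Jd G N f.
Proof.
move=> KJ [m [a [m0 Ha Heq]]].
apply: NNPP => Nf.
have fn0 : f != 0 by apply/negP => /eqP f0; apply: Nf; rewrite f0; apply: SuppIn0.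
have [e [Je le]] := lowval G fn0.
have eN : (e < N)%N by rewrite ltnNge; apply/negP => h; apply: Nf; apply: Jd_mono Je.
have Hs : Jd G (e * m)%N.+1 (\sum_(1 <= i < m.+1) a i * f ^+ (m - i)).
  rewrite big_nat_cond; apply: big_ind.
  - exact: SuppIn0.
  - by move=> x y; apply: SuppInD.
  - move=> i /andP [/andP [i1 im] _].
    have hi : (1 <= i <= m)%N by rewrite i1 -ltnS im.
    apply: (Jd_mono _ (Jd_mul (pow_Jd KJ (Ha i hi)) (Jd_exp (t:=(m - i)%N) Je))).
    have h1 : (e * i < i * N)%N by rewrite mulnC ltn_pmul2l.
    have h2 : (e * (m - i) + e * i = e * m)%N by rewrite -mulnDr subnK // -ltnS.
    lia.
have HL := low_exp m Je.
have : low G (e * m)%N (f ^+ m + \sum_(1 <= i < m.+1) a i * f ^+ (m - i)) = 0.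
  by rewrite Heq low0.
rewrite lowD (low_JdZ Hs) addr0 HL => /eqP.
by rewrite expf_eq0 (negbTE le) andbF.
Qed.

End Mono3.


Section Mono4.
Variables (k : fieldType) (n : nat).
Local Notation R := {mpoly k[n]}.
Implicit Types (G F : {set 'I_n}) (m u w s : 'X_{1..n}) (f g h : R) (I : R -> Prop).

Definition strip F m : 'X_{1..n} := [multinom (if i \in F then 0%N else m i) | i < n].
Definition fpart F m : 'X_{1..n} := [multinom (if i \in F then m i else 0%N) | i < n].

Lemma strip_fpart F m : (strip F m + fpart F m)%MM = m.
Proof. by apply/mnmP => i; rewrite mnmDE /strip /fpart !mnmE; case: ifP => _; rewrite ?add0n ?addn0. Qed.


Lemma degG_fpart F m : degG F (fpart F m) = 0%N.
Proof. by rewrite /degG big1 // => i hi; rewrite /fpart mnmE (negbTE hi). Qed.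

Lemma mdeg_strip F m : mdeg (strip F m) = degG F m.
Proof.
rewrite mdegE /degG [in RHS]big_mkcond /=; apply: eq_bigr => i _.
by rewrite /strip mnmE; case: ifP.
Qed.

Lemma degG_sub F G m : F \subset G -> (degG G m <= degG F m)%N.
Proof.
move=> sFG; apply: (sub_le_big (@leqnn) (fun x y => leq_addr y x)) => i.
by apply: contra => hi; apply: (subsetP sFG).
Qed.

Lemma coord_le_degG G m i : i \notin G -> (m i <= degG G m)%N.
Proof. by move=> hi; rewrite /degG (bigD1 i) //= leq_addr. Qed.

Lemma PF_sub F G f : F \subset G -> PF G f -> PF F f.
Proof.
move=> sFG /PF_Jd H; apply/PF_Jd => m /H; move=> h; apply: leq_trans h _.
exact: degG_sub.
Qed.

Lemma PF_X F i : i \notin F -> PF F ('X_i : R).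
Proof. by move=> hi; apply: ideal_gen_in; exists i. Qed.

Lemma notPF_X F i : i \in F -> ~ PF F ('X_i : R).
Proof.
move=> hi /PF_Jd H; have := H U_(i)%MM; rewrite msuppX mem_seq1 eqxx degGU hi.
by move=> /(_ isT).
Qed.

Lemma notPF_Xm F m : degG F m = 0%N -> ~ PF F ('X_[m] : R).
Proof.
move=> h /PF_Jd H; have := H m; rewrite msuppX mem_seq1 eqxx h.
by move=> /(_ isT).
Qed.

Lemma mono_ideal I : monomial_ideal I -> is_ideal I.
Proof.
move=> [S HS]; have [J0 JD JM] := ideal_gen_ideal (fun g => exists m, S m /\ g = 'X_[m]).
split.
- by apply/HS.
- by move=> a b /HS ha /HS hb; apply/HS; apply: JD.
- by move=> r a /HS ha; apply/HS; apply: JM.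
Qed.

Section WithI.
Variable I : R -> Prop.
Hypothesis hI : monomial_ideal I.

Lemma calF_prime F : in_calF I F -> is_prime_ideal (@PF k n F).
Proof. by case. Qed.

Lemma calF_sub F f : in_calF I F -> I f -> PF F f.
Proof. by case=> _ H _; apply: H. Qed.

Lemma IF_ideal F : in_calF I F -> is_ideal (IF I F).
Proof. by move=> hF; apply: iso_ideal; [apply: mono_ideal | apply: calF_prime]. Qed.

Lemma I_IF F f : in_calF I F -> I f -> IF I F f.
Proof. by move=> hF; apply: iso_of; case: (calF_prime hF). Qed.

Lemma strip_Q F m : in_calF I F -> IF I F 'X_[m] -> IF I F 'X_[strip F m].
Proof.
move=> hF [g [Pg Hg]]; exists (g * 'X_[fpart F m]); split.
- case: (calF_prime hF) => _ _ Pp /Pp [//|]; apply: notPF_Xm; exact: degG_fpart.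
- by rewrite -mulrA -mpolyXD addmC strip_fpart.
Qed.

Lemma exists_pow F l : in_calF I F -> l \notin F -> exists a, IF I F 'X_[U_(l) *+ a].
Proof.
move=> hF hl; apply: NNPP => H.
pose G' := l |: F.
have sub : forall f, I f -> PF G' f.
  case: hI => SI HSI; move=> f /HSI; apply: ideal_gen_min; first exact: ideal_gen_ideal.
  move=> g [s [hs ->]]; apply/PF_Jd; apply: SuppInX.
  rewrite lt0n; apply/negP => /eqP h0; apply: H; exists (s l).
  have -> : (U_(l) *+ s l)%MM = strip F s.
    apply/mnmP => i; rewrite mulmnE mnm1E /strip mnmE.
    case: (boolP (i \in F)) => hi.
    - have -> : (l == i) = false by apply/negbTE; apply: contraNneq hl => ->.
      by rewrite mul0n.
    - case: eqP => [->|ne]; first by rewrite mul1n.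
      have hiG : i \notin G' by rewrite /G' in_setU1 negb_or hi andbT; apply/eqP => e; apply: ne.
      have := coord_le_degG s hiG; rewrite h0 leqn0 mul0n => /eqP ->; done.
  apply: strip_Q => //; apply: I_IF => //; apply/HSI; apply: ideal_gen_in; by exists s.
case: hF => _ _ minF.
have := minF (PF G') (PF_prime k G') sub (fun f => PF_sub (f:=f) (subsetUr [set l] F)) _ (PF_X hl).
by apply: notPF_X; rewrite /G' in_setU1 eqxx.
Qed.

Lemma F_ne_G F G : in_calF I F -> in_calF I G -> F != G -> exists l, l \in F /\ l \notin G.
Proof.
move=> hF hG ne; apply: NNPP => H.
have sFG : F \subset G.
  apply/subsetP => x xF; apply: NNPP => xG; apply: H; exists x; split => //; exact/negP.
have PFG : forall f, PF F f -> PF G f.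
  case: hF => _ _ minF; apply: minF; first exact: (PF_prime k G).
  - by move=> f; apply: calF_sub.
  - by move=> f; apply: PF_sub.
move/negP: ne; apply; rewrite eqEsubset sFG /=.
apply/subsetP => x xG; apply: NNPP => xF.
have xF' : x \notin F by apply/negP.
have := PFG _ (PF_X (i:=x) (F:=F) xF'); exact: notPF_X.
Qed.

Variable F : {set 'I_n}.
Variable d : nat.

Variable SF : 'X_{1..n} -> Prop.
Hypothesis hF : in_calF I F.
Hypothesis SFdeg : forall m, SF m -> mdeg m = d.
Hypothesis SFgen : forall f, IF I F f <-> ideal_gen (fun g => exists m, SF m /\ g = 'X_[m]) f.

Lemma Q_up f : IF I F f -> SuppIn (fun m => exists s, SF s /\ (s <= m)%MM) f.
Proof.
move/SFgen; apply: SuppIn_gen.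
- by move=> m m' [s [hs le]] le'; exists s; split => //; apply: lepm_trans le'.
- by move=> g [s [hs ->]]; apply: SuppInX; exists s; split => //; apply: lepm_refl.
Qed.

Lemma Q_gen s : SF s -> IF I F 'X_[s].
Proof. by move=> hs; apply/SFgen; apply: ideal_gen_in; exists s. Qed.

Lemma Q_degX m : IF I F 'X_[m] -> (d <= degG F m)%N.
Proof.
move=> /(strip_Q hF) /Q_up /(_ (strip F m)); rewrite msuppX mem_seq1 eqxx.
move=> /(_ isT) [s [hs le]]; rewrite -mdeg_strip -(SFdeg hs); exact: mdeg_le.
Qed.

Lemma Q_Jd f : IF I F f -> Jd F d f.
Proof.
move/SFgen; apply: SuppIn_gen; first exact: Jd_upc.
move=> g [s [hs ->]]; apply: SuppInX; apply: Q_degX; exact: Q_gen.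
Qed.

Lemma I_Jd f : I f -> Jd F d f.
Proof. by move=> If; apply: Q_Jd; apply: I_IF. Qed.

Lemma xpow_d l : l \notin F -> IF I F 'X_[U_(l) *+ d].
Proof.
move=> hl; have [a Ha] := exists_pow hF hl.
have := Q_up Ha (m := (U_(l) *+ a)%MM); rewrite msuppX mem_seq1 eqxx.
move=> /(_ isT) [s [hs /mnm_lepP le]].
have hz : forall i, i != l -> s i = 0%N.
  move=> i ne; have := le i; rewrite mulmnE mnm1E eq_sym (negbTE ne) mul0n.
  by rewrite leqn0 => /eqP.
have ds : mdeg s = s l.
  rewrite mdegE (bigD1 l) //= big1 ?addn0 // => i; exact: hz.
have -> : (U_(l) *+ d)%MM = s.
  apply/mnmP => i; rewrite mulmnE mnm1E; case: (eqVneq l i) => [<-|ne].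
  - by rewrite mul1n -ds SFdeg.
  - by rewrite mul0n hz // eq_sym.
exact: Q_gen.
Qed.


End WithI.
End Mono4.


Section Mono5.
Variables (k : fieldType) (n : nat).
Local Notation R := {mpoly k[n]}.
Implicit Types (G F : {set 'I_n}) (m u w s c : 'X_{1..n}) (f g h : R) (I : R -> Prop).

Lemma mdeg_pos m : (0 < mdeg m)%N -> exists i, (0 < m i)%N.
Proof.
move=> H; apply: NNPP => N; move: H; rewrite mdegE big1 // => i _.
case: (posnP (m i)) => // p; exfalso; apply: N; by exists i.
Qed.

Lemma mdeg0_eq m : mdeg m = 0%N -> m = 0%MM.
Proof. by move=> /eqP; rewrite mdeg_eq0 => /eqP. Qed.

Lemma sub_deg b N : (N <= mdeg b)%N -> exists c, (c <= b)%MM /\ mdeg c = N.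
Proof.
elim: N => [|N IH] h; first by exists 0%MM; split; [apply/mnm_lepP => i; rewrite mnm0E | exact: mdeg0].
have [c [le dc]] := IH (ltnW h).
have [i hi] : exists i, (c i < b i)%N.
  apply: NNPP => H; have : (mdeg b <= mdeg c)%N.
    rewrite !mdegE; apply: leq_sum => i _; rewrite leqNgt; apply/negP => hi; apply: H; by exists i.
  by rewrite dc leqNgt h.
exists (c + U_(i))%MM; split; last by rewrite mdegD mdeg1 dc addn1.
apply/mnm_lepP => j; rewrite mnmDE mnm1E; move/mnm_lepP: le => /(_ j).
by case: (eqVneq i j) => [<-|_]; rewrite ?addn1 ?addn0.
Qed.

Lemma mnmX_piece i j e : ('X_i ^+ e * 'X_j : R) = 'X_[U_(i) *+ e + U_(j)].
Proof. by rewrite mpolyXD mpolyXn. Qed.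

Section Forward.
Variable I : R -> Prop.
Hypothesis hI : monomial_ideal I.
Variable F : {set 'I_n}.
Hypothesis hF : in_calF I F.
Variable e : nat.
Hypothesis pieces : forall i j, i \notin F -> j \notin F -> IF I F 'X_[U_(i) *+ e + U_(j)].

Lemma comb (t : nat) : forall c cc : 'X_{1..n}, (forall i, e * cc i <= c i)%N ->
  (forall i, i \in F -> c i = 0%N) -> (forall i, i \in F -> cc i = 0%N) ->
  mdeg cc = t -> mdeg c = (e.+1 * t)%N -> iso_component (ideal_pow I t) (PF F) 'X_[c].
Proof.
have hP := calF_prime hF.
elim: t => [|t IH] c cc hle hcF hccF dcc dc.
  rewrite muln0 in dc; rewrite (mdeg0_eq dc) mpolyX0.
  by case: hP => _ P1 _; exists 1.
have [i hi] : exists i, (0 < cc i)%N by apply: mdeg_pos; rewrite dcc.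
have [j hj] : exists j, (e * cc j < c j)%N.
  apply: NNPP => H; have : (mdeg c <= e * mdeg cc)%N.
    rewrite !mdegE big_distrr /=; apply: leq_sum => x _; rewrite leqNgt; apply/negP => hx.
    by apply: H; exists x.
  rewrite dc dcc; nia.
have iF : i \notin F by apply/negP => /hccF; lia.
have jF : j \notin F by apply/negP => /hcF; lia.
have hlei := hle i; have hlej := hle j.
pose p := (U_(i) *+ e + U_(j))%MM.
have lep : (p <= c)%MM.
  apply/mnm_lepP => x; rewrite /p mnmDE mulmnE !mnm1E.
  have := hle x; case: (eqVneq i x) => [?|nix]; case: (eqVneq j x) => [?|njx]; subst;
    rewrite ?eqxx ?(negbTE nix) ?(negbTE njx) /=; nia.
pose c' := (c - p)%MM; pose cc' := (cc - U_(i))%MM.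
have -> : c = (c' + p)%MM by rewrite /c' submK.
rewrite mpolyXD; apply: iso_mul => //; last exact: pieces.
apply: (IH c' cc').
- move=> x; rewrite /c' /cc' /p !mnmBE mnmDE mulmnE !mnm1E.
  have := hle x; case: (eqVneq i x) => [?|nix]; case: (eqVneq j x) => [?|njx]; subst;
    rewrite ?eqxx ?(negbTE nix) ?(negbTE njx) /=; nia.
- move=> x xF; rewrite /c' mnmBE hcF //.
- move=> x xF; rewrite /cc' mnmBE hccF //.
- have leU : (U_(i) <= cc)%MM by rewrite lep1mP -lt0n.
  by move: dcc; rewrite -(submK leU) mdegD mdeg1 /cc' addn1 => -[].
- have : mdeg c = (mdeg c' + mdeg p)%N by rewrite -mdegD /c' submK.
  rewrite /p mdegD mdegMn !mdeg1 dc; nia.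
Qed.

Lemma exists_cc t c : (n * e.+1 <= t)%N -> mdeg c = (e.+1 * t)%N ->
  (forall i, i \in F -> c i = 0%N) ->
  exists cc : 'X_{1..n}, [/\ (forall i, e * cc i <= c i)%N,
     (forall i, i \in F -> cc i = 0%N) & mdeg cc = t].
Proof.
move=> tn dc hcF.
pose b := [multinom (if e == 0%N then c i else c i %/ e) | i < n].
have hb : forall i, (e * b i <= c i)%N.
  move=> i; rewrite /b mnmE; case: eqP => [->|_]; first by rewrite mul0n.
  by rewrite mulnC leq_divM.
have hbF : forall i, i \in F -> b i = 0%N by move=> i iF; rewrite /b mnmE hcF // div0n if_same.
have tb : (t <= mdeg b)%N.
  case: (eqVneq e 0%N) => [e0|en0].
  - have -> : b = c by apply/mnmP => i; rewrite /b mnmE e0 eqxx.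
    by rewrite dc e0 mul1n.
  - have hs : (mdeg c <= e * mdeg b + n * e.-1)%N.
      have cst : (n * e.-1 = \sum_(i < n) e.-1)%N by rewrite sum_nat_const card_ord.
      rewrite !mdegE big_distrr /= cst -big_split /=.

      apply: leq_sum => i _; rewrite /b mnmE (negbTE en0).
      have e0 : (0 < e)%N by rewrite lt0n.
      have := divn_eq (c i) e; have := ltn_pmod (c i) e0.

      move: (c i %/ e)%N (c i %% e)%N => q r hr ->; nia.
    move: hs; rewrite dc; nia.
have [cc [lec dcc]] := sub_deg tb.
move/mnm_lepP: lec => lec.
exists cc; split => //.
- by move=> i; apply: leq_trans (hb i); rewrite leq_mul2l lec orbT.
- by move=> i iF; have := lec i; rewrite hbF // leqn0 => /eqP.
Qed.

Lemma J_in_iso t f : (n * e.+1 <= t)%N -> Jd F (e.+1 * t) f ->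
  iso_component (ideal_pow I t) (PF F) f.
Proof.
move=> tn Hf; have hP := calF_prime hF; have Hid := iso_pow_ideal I t hP.
rewrite (mpolyE f); apply: ideal_sum => // m /Hf hm.
rewrite -mul_mpolyC; apply: ideal_mulr => //.
have [c [lec dc]] : exists c, (c <= strip F m)%MM /\ mdeg c = (e.+1 * t)%N.
  by apply: sub_deg; rewrite mdeg_strip.
move/mnm_lepP: lec => lec.
have hcF : forall i, i \in F -> c i = 0%N.
  by move=> i iF; have := lec i; rewrite /strip mnmE iF leqn0 => /eqP.
have lecm : (c <= m)%MM.
  apply/mnm_lepP => i; apply: leq_trans (lec i) _; rewrite /strip mnmE; case: ifP => //.
have [cc [h1 h2 h3]] := exists_cc tn dc hcF.
rewrite -(submK lecm) mpolyXD; apply: ideal_mulr => //.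
exact: (comb h1 hcF h2 h3 dc).
Qed.

End Forward.

Lemma all_in_iso I F t f : in_calF I F -> IF I F 1 -> iso_component (ideal_pow I t) (PF F) f.
Proof.
move=> hF h1; have hP := calF_prime hF.
have := iso_exp t hP h1; rewrite expr1n => h.
by rewrite -[f]mulr1; apply: ideal_mulr => //; apply: iso_pow_ideal.
Qed.

End Mono5.


Section Mono6.
Variables (k : fieldType) (n : nat).
Local Notation R := {mpoly k[n]}.

Lemma forward (I : R -> Prop) (d : {set 'I_n} -> nat) : monomial_ideal I ->
  (forall F, in_calF I F -> gen_by_monomials_of_degree (IF I F) (d F)) ->
  (forall F, in_calF I F -> forall i j : 'I_n, i \notin F -> j \notin F ->
      IF I F ('X_i ^+ (d F).-1 * 'X_j)) ->
  exists t0, forall t, (t0 <= t)%N -> integrally_closed (symbolic_power I t).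
Proof.
move=> hI hQ hR.
exists (n * (\max_(F : {set 'I_n}) d F)).+1 => t tl f hf F hF.
have hP := calF_prime hF.
suff [N [H1 H2]] : exists N, (forall x, iso_component (ideal_pow I t) (PF F) x -> Jd F N x) /\
    (forall x, Jd F N x -> iso_component (ideal_pow I t) (PF F) x).
  apply: H2; apply: (Jd_closed (K := symbolic_power I t)) => // x hx; apply: H1; exact: hx.
have t1 : (0 < t)%N by apply: leq_trans tl.
have dF : (d F <= \max_(G : {set 'I_n}) d G)%N by apply: (leq_bigmax F).
case: (eqVneq F setT) => [FT|FnT].
- exists t; split.
  + move=> x [g [Pg Hg]]; apply: (notP_mul Pg); rewrite -[t]muln1.
    apply: (pow_Jd (K := I)) Hg => y Iy.
    by apply/PF_Jd; apply: calF_sub hF Iy.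
  + move=> x Hx; have -> : x = 0.
      apply/mpolyP => m; rewrite mcoeff0; apply: memN_msupp_eq0; apply/negP => /Hx.
      by rewrite FT degG_setT leqn0 => /eqP t0; move: t1; rewrite t0.
    by case: (iso_pow_ideal I t hP).
- have [i0 i0F] : exists i0, i0 \notin F.
    apply: NNPP => H; move/negP: FnT; apply; apply/eqP/setP => x; rewrite in_setT.
    by apply: NNPP => xF; apply: H; exists x; apply/negP.
  have [SF [SFdeg SFgen]] := hQ F hF.
  exists (d F * t)%N; split.
  + move=> x [g [Pg Hg]]; apply: (notP_mul Pg); rewrite mulnC.
    apply: (pow_Jd (K := I)) Hg => y Iy.
    exact: (I_Jd hF SFdeg SFgen Iy).
  + case: (posnP (d F)) => [d0|dpos].
    * have h := hR F hF i0 i0 i0F i0F; rewrite d0 /= expr0 mul1r in h.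
      have := Q_up SFgen h (m := U_(i0)%MM); rewrite msuppX mem_seq1 eqxx.
      move=> /(_ isT) [s [hs le]].
      have s0 : s = 0%MM by apply: mdeg0_eq; rewrite SFdeg.
      have h1 := Q_gen SFgen hs; rewrite s0 mpolyX0 in h1.
      move=> x _; exact: all_in_iso hF h1.
    * move=> x Hx; have de : d F = (d F).-1.+1 by rewrite prednK.
      apply: (J_in_iso (e := (d F).-1) hF).
      - by move=> i j iF jF; rewrite -mnmX_piece; apply: hR.
      - by rewrite -de; apply: leq_trans (ltnW tl); rewrite leq_mul2l dF orbT.
      - by rewrite -de.
Qed.

End Mono6.


Section Mono7.
Variables (k : fieldType) (n : nat).
Local Notation R := {mpoly k[n]}.
Implicit Types (G F : {set 'I_n}) (m u w s c : 'X_{1..n}) (f g h : R) (I : R -> Prop).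

Fixpoint T (SI : 'X_{1..n} -> Prop) (t : nat) (m : 'X_{1..n}) : Prop :=
  match t with
  | 0 => True
  | t'.+1 => exists s, [/\ SI s, (s <= m)%MM & T SI t' (m - s)%MM]
  end.

Lemma T_upc SI t : upc (T SI t).
Proof.
elim: t => [|t IH] m m' //= [s [hs le HT]] le'.
exists s; split => //; first by apply: lepm_trans le'.
apply: IH HT _; apply/mnm_lepP => x; rewrite !mnmBE; move/mnm_lepP: le' => /(_ x).
lia.
Qed.

Lemma pow_T I SI t f : (forall f, I f <-> ideal_gen (fun g => exists m, SI m /\ g = 'X_[m]) f) ->
  ideal_pow I t f -> SuppIn (T SI t) f.
Proof.
move=> HSI; elim: t f => [|t IH] f; first by move=> _ m _.
apply: (SuppIn_gen (D := T SI t.+1)); first exact: T_upc.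

move=> g [a [b [Ha Ib ->]]].
have Hb : SuppIn (fun m => exists s, SI s /\ (s <= m)%MM) b.
  move/HSI: Ib; apply: SuppIn_gen.
  - by move=> m m' [s [hs le]] le'; exists s; split => //; apply: lepm_trans le'.
  - by move=> g' [s [hs ->]]; apply: SuppInX; exists s; split => //; apply: lepm_refl.
move=> m /(SuppInM (IH a Ha) Hb) [u [w [Tu [s [hs lsw]] ->]]].
exists s; split => //.
- by apply: lepm_trans lsw _; apply: lem_addl.
- apply: (T_upc Tu); apply/mnm_lepP => x; rewrite mnmBE mnmDE.
  move/mnm_lepP: lsw => /(_ x); lia.
Qed.

Lemma Tdeg SI F dd t m : (forall s, SI s -> dd <= degG F s)%N -> T SI t m ->
  (dd * t <= degG F m)%N.
Proof.
move=> hS; elim: t m => [|t IH] m /=; first by rewrite muln0.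
move=> [s [hs le HT]]; have := IH _ HT; rewrite degGB // => h1.
have h2 := hS s hs; have h3 := degG_le F le; rewrite mulnS; lia.
Qed.

Lemma degF_two F m i j : i != j -> i \notin F -> j \notin F ->
  (forall x, x \notin F -> x != i -> x != j -> m x = 0%N) -> degG F m = (m i + m j)%N.
Proof.
move=> ij iF jF hz; rewrite /degG (bigD1 i) //= (bigD1 j) /=; last by rewrite jF eq_sym.
rewrite big1 ?addn0 // => x /andP [/andP [xF xi] xj]; exact: hz.
Qed.

Section Conv.
Variable I : R -> Prop.
Variable SI : 'X_{1..n} -> Prop.
Hypothesis HSI : forall f, I f <-> ideal_gen (fun g => exists m, SI m /\ g = 'X_[m]) f.
Variable F : {set 'I_n}.
Hypothesis hF : in_calF I F.
Variable e : nat.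
Hypothesis SIdeg : forall s, SI s -> (e.+1 <= degG F s)%N.
Variables i j : 'I_n.
Hypotheses (ij : i != j) (iF : i \notin F) (jF : j \notin F).

Lemma SI_I s : SI s -> I 'X_[s].
Proof. by move=> hs; apply/HSI; apply: ideal_gen_in; exists s. Qed.

Lemma Tfin t : forall m, T SI t m ->
  (forall x, x \notin F -> x != i -> x != j -> m x = 0%N) -> m j = 1%N ->
  (m i + 1 <= e.+1 * t)%N -> IF I F 'X_[U_(i) *+ e + U_(j)].
Proof.
elim: t => [|t IH] m /=; first by move=> _ _ _; rewrite muln0; lia.
move=> [s [hs /mnm_lepP le HT]] hz mj mi.
have sz : forall x, x \notin F -> x != i -> x != j -> s x = 0%N.
  by move=> x xF xi xj; have := le x; rewrite hz // leqn0 => /eqP.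
have ds := degF_two ij iF jF sz.
have dsi := SIdeg hs; rewrite ds in dsi.
have hsj := le j; rewrite mj in hsj.
have hsi := le i.
have mz : forall x, x \notin F -> x != i -> x != j -> (m - s)%MM x = 0%N.
  by move=> x xF xi xj; rewrite mnmBE hz.
case: (posnP (s j)) => [sj0|sj1].
- apply: (IH _ HT mz); rewrite mnmBE ?sj0 ?mj //; lia.
- have sj : s j = 1%N by lia.
  have := Tdeg SIdeg HT; rewrite (degF_two ij iF jF mz) !mnmBE sj mj => hd.
  have si : s i = e by nia.
  have -> : (U_(i) *+ e + U_(j))%MM = strip F s.
    apply/mnmP => x; rewrite mnmDE mulmnE !mnm1E /strip mnmE.
    case: (boolP (x \in F)) => xF.
    + have -> : (i == x) = false by apply/negbTE; apply: contraNneq iF => ->.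
      by have -> : (j == x) = false by apply/negbTE; apply: contraNneq jF => ->.
    + case: (eqVneq i x) => [<-|xi].
        by rewrite eq_sym (negbTE ij) si mul1n addn0.
      case: (eqVneq j x) => [<-|xj].
        by rewrite sj.
      by rewrite sz // eq_sym.


  by apply: strip_Q => //; apply: I_IF => //; apply: SI_I.
Qed.

Lemma notin_iso (t : nat) (fm : 'X_{1..n}) : (0 < t)%N ->
  (forall x, x \notin F -> fm x = (U_(i) *+ (e.+1 * t).-1 + U_(j))%MM x) ->
  iso_component (ideal_pow I t) (PF F) 'X_[fm] -> IF I F 'X_[U_(i) *+ e + U_(j)].
Proof.
move=> t1 hfm [g [Pg Hg]].
have [u [hu du]] : exists u, u \in msupp g /\ degG F u = 0%N.
  apply: NNPP => H; apply: Pg; apply/PF_Jd => u hu; rewrite lt0n; apply/negP => /eqP h.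
  by apply: H; exists u.
have mem : (fm + u)%MM \in msupp (g * 'X_[fm]).
  by rewrite mcoeff_msupp mcoeffMX -mcoeff_msupp.
have := pow_T HSI Hg => /(_ _ mem) HT.
apply: (Tfin HT).
- move=> x xF xi xj; rewrite mnmDE hfm // mnmDE mulmnE !mnm1E eq_sym (negbTE xi) eq_sym (negbTE xj).
  by have := coord_le_degG u xF; rewrite du leqn0 => /eqP ->.
- rewrite mnmDE hfm // mnmDE mulmnE !mnm1E (negbTE ij) eqxx.
  by have := coord_le_degG u jF; rewrite du leqn0 => /eqP ->.
- rewrite mnmDE hfm // mnmDE mulmnE !mnm1E eq_sym (negbTE ij) eqxx.
  have := coord_le_degG u iF; rewrite du leqn0 => /eqP ->.
  nia.
Qed.

End Conv.
End Mono7.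


Section Mono8.
Variables (k : fieldType) (n : nat).
Local Notation R := {mpoly k[n]}.

Lemma mono_mult (J : R -> Prop) (w u : 'X_{1..n}) : is_ideal J -> J 'X_[w] -> (w <= u)%MM -> J 'X_[u].
Proof. by move=> HJ Jw le; rewrite -(submK le) mpolyXD; apply: ideal_mulr. Qed.

Lemma converse (I : R -> Prop) (d : {set 'I_n} -> nat) : monomial_ideal I ->
  (forall F, in_calF I F -> gen_by_monomials_of_degree (IF I F) (d F)) ->
  (exists t0, forall t, (t0 <= t)%N -> integrally_closed (symbolic_power I t)) ->
  (forall F, in_calF I F -> forall i j : 'I_n, i \notin F -> j \notin F ->
      IF I F ('X_i ^+ (d F).-1 * 'X_j)).
Proof.
move=> hI hQ [t0 Ht] F hF i j iF jF.
have [SF [SFdeg SFgen]] := hQ F hF.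
have hIF := IF_ideal hI hF.
have hP := calF_prime hF.
rewrite mnmX_piece.
case: (posnP (d F)) => [d0|dpos].
  have h1 := xpow_d hI hF SFdeg SFgen iF; rewrite d0 mulm0n mpolyX0 in h1.
  by rewrite -[X in IF I F X]mulr1; apply: ideal_mulr.
have de : d F = (d F).-1.+1 by rewrite prednK.
move: de; set e := (d F).-1 => de.
case: (eqVneq i j) => [<-|ij].
  by have := xpow_d hI hF SFdeg SFgen iF; rewrite de mulmSr.
apply: NNPP => Hno.
have [SI HSI] := hI.
have SIdeg : forall s, SI s -> (e.+1 <= degG F s)%N.
  move=> s hs; rewrite -de; apply: (Q_degX hF SFdeg SFgen); apply: I_IF => //.
  by apply/HSI; apply: ideal_gen_in; exists s.
pose t := t0.+1.
pose Nh := (t * \max_(G : {set 'I_n}) d G)%N.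
pose hm : 'X_{1..n} := [multinom (if x \in F then Nh else 0%N) | x < n].
pose w := (U_(i) *+ d F)%MM.
pose fm := (U_(i) *+ (d F * t).-1 + U_(j) + hm)%MM.
pose u1 := (w *+ t + hm)%MM.
pose u2 := (w *+ t0 + U_(j) *+ d F + hm)%MM.
have key : (fm *+ d F = u1 *+ e + u2)%MM.
  apply/mnmP => x; rewrite /fm /u1 /u2 /w /hm.
  rewrite !(mulmnE, mnmDE, mnm1E, mnmE) de -!subn1.
  case: (i == x); case: (j == x); case: (x \in F); nia.
have memG : forall G, in_calF I G -> G != F ->
    iso_component (ideal_pow I t) (PF G) 'X_[hm].
  move=> G hG GF.
  have FG : F != G by rewrite eq_sym.
  have [l [lF lG]] := F_ne_G hF hG FG.

  have [SG [SGdeg SGgen]] := hQ G hG.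
  have h := xpow_d hI hG SGdeg SGgen lG.
  have := iso_exp t (calF_prime hG) h; rewrite mpolyXn => h'.
  apply: (mono_mult (iso_pow_ideal I t (calF_prime hG)) h').
  apply/mnm_lepP => x; rewrite /hm mnmE !mulmnE mnm1E.
  case: (eqVneq l x) => [<-|_]; last by rewrite !mul0n.
  rewrite lF mul1n /Nh mulnC leq_mul2l.
  by rewrite (leq_bigmax G) orbT.
have in1 : symbolic_power I t 'X_[u1].
  move=> G hG; case: (eqVneq G F) => [->|GF].
  - rewrite /u1 mpolyXD -mpolyXn; apply: ideal_mull; first exact: iso_pow_ideal.
    exact: iso_exp (xpow_d hI hF SFdeg SFgen iF).
  - apply: (mono_mult (iso_pow_ideal I t (calF_prime hG)) (memG G hG GF)).
    exact: lem_addl.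
have in2 : symbolic_power I t 'X_[u2].
  move=> G hG; case: (eqVneq G F) => [->|GF].
  - rewrite /u2 !mpolyXD -mpolyXn; apply: ideal_mull; first exact: iso_pow_ideal.
    apply: iso_mul => //; first exact: iso_exp (xpow_d hI hF SFdeg SFgen iF).
    exact: (xpow_d hI hF SFdeg SFgen jF).
  - apply: (mono_mult (iso_pow_ideal I t (calF_prime hG)) (memG G hG GF)).
    exact: lem_addl.
have integ : integral_over_ideal (symbolic_power I t) 'X_[fm].
  exists (d F), (fun x => if x == d F then - 'X_[fm] ^+ d F else 0); split.
  - exact: dpos.
  - move=> x /andP [x1 xd]; case: eqP => [->|_]; last first.
      by case: (ideal_pow_ideal (symbolic_power I t) x).
    rewrite -mulN1r; apply: ideal_mulr; first exact: ideal_pow_ideal.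
    rewrite mpolyXn key mpolyXD -mpolyXn de.
    by apply: ideal_pow_mul => //; apply: ideal_pow_exp.
  - rewrite big_nat_recr //= eqxx subnn expr0 mulr1 big_nat big1 ?add0r ?subrr //.
    by move=> x /andP [_ xd]; rewrite ltn_eqF // mul0r.
have hmem := Ht t (leqnSn t0) _ integ F hF.
apply: Hno; apply: (notin_iso HSI hF SIdeg ij iF jF (t := t) (fm := fm)) => //.
move=> x xF; rewrite /fm mnmDE /hm mnmE (negbTE xF) addn0 de.
by [].
Qed.

End Mono8.

Unset Implicit Arguments.

Theorem proposition3p6 (k : fieldType) (n : nat) (I : {mpoly k[n]} -> Prop)
    (d : {set 'I_n} -> nat) :
  monomial_ideal I ->
  (forall F, in_calF I F -> gen_by_monomials_of_degree (IF I F) (d F)) ->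
  ((exists t0 : nat, forall t : nat, (t0 <= t)%N -> integrally_closed (symbolic_power I t))
   <->
   (forall F, in_calF I F -> forall i j : 'I_n, i \notin F -> j \notin F ->
      IF I F ('X_i ^+ (d F).-1 * 'X_j))).
Proof.
move=> hI hQ; split.
- by move=> H; exact: (converse hI hQ H).
- by move=> H; exact: (forward hI hQ H).
Qed.
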